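(* Let $(X,G)$ be a minimal topological dynamical system. If $\pi_{eq}$ is almost $N$ to one for some $N\in\mathbb N\cup\{\infty\}$, then $|E|\ge N$ for every $E\in\mathcal X$.
   Context: $G$ is an infinite countable discrete group; a tds $(X,G)$ is a compact metric space with a $G$-action by homeomorphisms; minimal means no proper nonempty closed invariant subset. $\pi_{eq}:X\to X_{eq}$ is the factor map onto the maximal equicontinuous factor; it is almost $N$ to one if $\{y\in X_{eq}:|\pi_{eq}^{-1}(y)|=N\}$ is a residual subset of $X_{eq}$. $2^X$ is the space of nonempty closed subsets of $X$ with the Hausdorff metric, and $\mathcal X=\overline{\{\pi_{eq}^{-1}(y):y\in X_{eq}\}}\subset 2^X$. *)

(* Defs.v *)
From HB Require Import structures.
From mathcomp Require Import all_boot all_order all_algebra.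
From mathcomp Require Import monoid.
From mathcomp Require Import all_classical all_reals.
From mathcomp Require Import topology normedtype.
Set Implicit Arguments. Unset Strict Implicit. Unset Printing Implicit Defensive.
Import Order.TTheory GRing.Theory Num.Theory.
Local Open Scope classical_set_scope.
Local Open Scope ring_scope.

Inductive natinf := Fin of nat | Inf.

Definition card_is {T} (A : set T) (N : natinf) : Prop :=
  match N with Fin n => (A #= `I_n)%card | Inf => infinite_set A end.
Definition card_geq {T} (A : set T) (N : natinf) : Prop :=
  match N with Fin n => (`I_n #<= A)%card | Inf => infinite_set A end.

(** A G-action on X by homeomorphisms: a (left) group action by continuous maps
    (each act g is then a homeomorphism with inverse act g^-1). *)
Definition is_action (G : groupType) (X : topologicalType) (act : G -> X -> X) :=
  (forall g, continuous (act g)) /\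
  (forall x, act 1%g x = x) /\
  (forall g h x, act (g * h)%g x = act g (act h x)).

Definition tds {R : realType} (G : groupType) (X : metricType R)
    (act : G -> X -> X) := compact [set: X] /\ is_action act.

Definition invariant (G : groupType) (X : Type) (act : G -> X -> X) (A : set X) :=
  forall g x, A x -> A (act g x).

Definition minimal (G : groupType) (X : topologicalType) (act : G -> X -> X) :=
  forall A : set X, A !=set0 -> closed A -> invariant act A -> A = [set: X].

Definition equicontinuous_sys {R : realType} (G : groupType) (Y : metricType R)
    (act : G -> Y -> Y) :=
  forall e : R, 0 < e -> exists2 d : R, 0 < d &
    forall y y' : Y, mdist y y' < d -> forall g, mdist (act g y) (act g y') < e.

Definition factor_map (G : groupType) (X Y : topologicalType)
    (actX : G -> X -> X) (actY : G -> Y -> Y) (p : X -> Y) :=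
  continuous p /\ (forall y, exists x, p x = y) /\
  (forall g x, p (actX g x) = actY g (p x)).

Definition max_eq_factor {R : realType} (G : groupType) (X Y : metricType R)
    (actX : G -> X -> X) (actY : G -> Y -> Y) (p : X -> Y) :=
  tds actY /\ equicontinuous_sys actY /\ factor_map actX actY p /\
  forall (Z : metricType R) (actZ : G -> Z -> Z) (q : X -> Z),
    tds actZ -> equicontinuous_sys actZ -> factor_map actX actZ q ->
    exists f : Y -> Z, factor_map actY actZ f /\ q = f \o p.

Definition residual (T : topologicalType) (S : set T) :=
  exists U : nat -> set T, (forall n, open (U n) /\ dense (U n)) /\
    \bigcap_n U n `<=` S.

Definition almost_N_to_one (X : Type) (T : topologicalType) (p : X -> T)
  (N : natinf) := residual [set y : T | card_is (p @^-1` [set y]) N].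

Definition dist_pt_set {R : realType} (X : metricType R) (x : X) (B : set X) : R :=
  inf [set mdist x b | b in B].
Definition hausdorff_dist {R : realType} (X : metricType R) (A B : set X) : R :=
  Num.max (sup [set dist_pt_set a B | a in A]) (sup [set dist_pt_set b A | b in B]).

Definition hyper {R : realType} (X : metricType R) (E : set X) :=
  E !=set0 /\ closed E.

Definition hyper_closure {R : realType} (X : metricType R) (S : set (set X)) :
  set (set X) :=
  [set E | hyper E /\ forall e : R, 0 < e ->
     exists2 F, S F & hausdorff_dist E F < e].

Definition fibre_closure {R : realType} (X : metricType R) (Y : Type) (p : X -> Y) :=
  hyper_closure [set p @^-1` [set y] | y in [set: Y]].

(* Main.v *)
Require Import Defs.
From HB Require Import structures.
From mathcomp Require Import all_boot all_order all_algebra.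
From mathcomp Require Import monoid.
From mathcomp Require Import all_classical all_reals.
From mathcomp Require Import topology normedtype.
From mathcomp Require Import lra.
Import Order.TTheory GRing.Theory Num.Theory.
Import metricType_numDomainType.
Local Open Scope classical_set_scope.
Local Open Scope ring_scope.

Section Helpers.
Context {R : realType}.

Lemma nbhs_mdistE {Y : metricType R} (y : Y) (A : set Y) :
  nbhs y A <-> exists2 d : R, 0 < d & forall w, mdist y w < d -> A w.
Proof.
rewrite -filter_from_mdist_nbhs; split => [[d d0 H]|[d d0 H]]; by exists d.
Qed.

Lemma mball_nbhs {Y : metricType R} (y : Y) (d : R) :
  0 < d -> nbhs y [set w | mdist y w < d].
Proof. by move=> d0; apply/nbhs_mdistE; exists d. Qed.

Lemma cont_mdist {Y Z : metricType R} (f : Y -> Z) (y : Y) (e : R) :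
  continuous f -> 0 < e ->
  exists2 d : R, 0 < d & forall w, mdist y w < d -> mdist (f y) (f w) < e.
Proof.
move=> cf e0.
have /nbhs_mdistE[d d0 H] := cf y _ (mball_nbhs (f y) e e0).
by exists d.
Qed.

Lemma mball_open {Y : metricType R} (a : Y) (r : R) :
  open [set w | mdist a w < r].
Proof.
rewrite openE => w /= aw; apply/nbhs_mdistE.
exists (r - mdist a w); first by rewrite subr_gt0.
move=> z wz /=; have := @metric_triangle _ _ a w z; lra.
Qed.


Lemma compact_bnd {Y : metricType R} (x0 : Y) :
  compact [set: Y] -> exists M : R, forall a, mdist x0 a <= M.
Proof.
move=> cY; apply: contrapT => nb.
have H : forall n : nat, exists a : Y, n%:R < mdist x0 a.
  move=> n; apply: contrapT => hn; apply: nb; exists n%:R => a.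
  rewrite leNgt; apply/negP => h; apply: hn; by exists a.
have [a Ha] := choice H.
have [l [_ cl]] := cY (a @ \oo) _ filterT.
pose N := (Num.truncn (mdist x0 l + 1)).+1.
have FA : (a @ \oo) [set w | N%:R < mdist x0 w].
  exists N => // n /= hn; apply: le_lt_trans (Ha n); by rewrite ler_nat.
have [w [/= h1 h2]] := cl _ _ FA (mball_nbhs l 1 ltr01).
have := @metric_triangle _ _ x0 l w; have := truncnS_gt (mdist x0 l + 1).
rewrite -/N; lra.
Qed.

Lemma bnd2 {Y : metricType R} :
  compact [set: Y] -> exists M : R, forall a b : Y, mdist a b <= M.
Proof.
move=> cY; case: (pselect (exists y : Y, True)) => [[x0 _]|ne]; last first.
  by exists 0 => a; exfalso; apply: ne; exists a.
have [M HM] := compact_bnd x0 cY; exists (M + M) => a b.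
have := @metric_triangle _ _ a x0 b; have := HM a; have := HM b.
rewrite (@metric_sym _ _ a x0); lra.
Qed.

Lemma hd_near {Y : metricType R} (A B : set Y) (e M : R) :
  (forall a b : Y, mdist a b <= M) -> B !=set0 -> hausdorff_dist A B < e ->
  forall a, A a -> exists2 b, B b & mdist a b < e.
Proof.
move=> HM [b0 Bb0] hAB a Aa.
have lbT : forall a', has_lbound [set mdist a' b | b in B].
  by move=> a'; exists 0 => _ [b _ <-]; exact: mdist_ge0.
have le1 : dist_pt_set a B <= sup [set dist_pt_set a' B | a' in A].
  apply: ub_le_sup; last by exists a.
  exists M => _ [a' _ <-]; rewrite /dist_pt_set.
  apply: le_trans (HM a' b0); apply: ge_inf => //; by exists b0.
have : dist_pt_set a B < e.
  apply: le_lt_trans le1 _; move: hAB; rewrite /hausdorff_dist gt_max.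
  by case/andP.
rewrite /dist_pt_set => /inf_lt[]; first by exists (mdist a b0), b0.
by move=> _ [b Bb <-] h; exists b.
Qed.

Lemma hd_sym {Y : metricType R} (A B : set Y) :
  hausdorff_dist A B = hausdorff_dist B A.
Proof. by rewrite /hausdorff_dist maxC. Qed.

Lemma seq_min (T : eqType) (s : seq T) (r : T -> R) (eta : R) :
  (forall a, 0 < r a) -> 0 < eta ->
  exists2 eps : R, 0 < eps & eps <= eta /\ forall a, a \in s -> eps <= r a.
Proof.
move=> hr heta; elim: s => [|b s [e e0 [he hs]]]; first by exists eta.
exists (Num.min e (r b)); first by rewrite lt_min e0 hr.
split; first by rewrite ge_min he.
move=> a; rewrite inE => /orP[/eqP->|/hs ha]; rewrite ge_min ?lexx ?orbT//.
by rewrite ha.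
Qed.

Lemma nat_min (m : nat) (r : nat -> R) :
  (forall j, (j <= m)%N -> 0 < r j) ->
  exists2 e : R, 0 < e & forall j, (j <= m)%N -> e <= r j.
Proof.
elim: m r => [|m IH] r hr.
  exists (r 0%N); first exact: hr.
  by move=> j; rewrite leqn0 => /eqP ->.
have [e e0 he] := IH r (fun j hj => hr j (leqW hj)).
exists (Num.min e (r m.+1)); first by rewrite lt_min e0 hr.
move=> j; rewrite leq_eqVlt => /orP[/eqP->|hj]; rewrite ge_min ?lexx ?orbT//.
by rewrite he.
Qed.

Lemma dense_inter {Y : topologicalType} (A B : set Y) :
  open A -> dense A -> dense B -> dense (A `&` B).
Proof.
move=> oA dA dB O O0 oO; rewrite setIA; apply: dB.
  exact: dA.
exact: openI.
Qed.

Lemma baire_cpt {Y : metricType R} (y0 : Y) (V : nat -> set Y) :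
  compact [set: Y] -> (forall n, open (V n) /\ dense (V n)) ->
  exists l, forall n, V n l.
Proof.
move=> cY oV.
have step : forall p : nat * (Y * R), exists q : Y * R, 0 < p.2.2 ->
    0 < q.2 /\ (forall w, mdist q.1 w < 2 * q.2 -> mdist p.2.1 w < p.2.2 /\ V p.1 w).
  move=> [n [a r]] /=; case: (pselect (0 < r)) => r0; last by exists (y0, 1).
  have [z [/= az Vz]] : ([set w | mdist a w < r] `&` V n) !=set0.
    apply: (proj2 (oV n)); last exact: mball_open.
    by exists a; rewrite /= mdistxx.
  have : nbhs z ([set w | mdist a w < r] `&` V n).
    apply: open_nbhs_nbhs; split => //; apply: openI; first exact: mball_open.
    exact: (proj1 (oV n)).
  move=> /nbhs_mdistE[d d0 Hd]; exists (z, d / 2) => _ /=.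
  split; first by rewrite divr_gt0.
  move=> w hw; apply: Hd; move: hw; lra.
have [f Hf] := choice step.
pose fix s n := if n is k.+1 then f (k, s k) else (y0, 1).
have spos : forall n, 0 < (s n).2.
  elim => [|k IH] /=; first exact: ltr01.
  by have [] := Hf (k, s k) IH.
have snest : forall n k, (n <= k)%N -> forall w, mdist (s k).1 w < (s k).2 ->
    mdist (s n).1 w < (s n).2.
  move=> n k; elim: k => [|k IH]; first by rewrite leqn0 => /eqP ->.
  rewrite leq_eqVlt => /orP[/eqP -> //|hk] w hw; apply: IH => //.
  have [_ H2] := Hf (k, s k) (spos k).
  apply: (proj1 (H2 w _)); have := spos k.+1; move: hw => /=; lra.
pose a n := (s n).1.
have [l [_ cl]] := cY (a @ \oo) _ filterT.
exists l => n.
have FA : (a @ \oo) [set w | mdist (s n.+1).1 w < (s n.+1).2].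
  exists n.+1 => // k /= hk; apply: (snest _ _ hk); rewrite mdistxx; exact: spos.
have [w [/= h1 h2]] := cl _ _ FA (mball_nbhs l _ (spos n.+1)).
have [_ H2] := Hf (n, s n) (spos n).
apply: (proj2 (H2 l _)).
have := @metric_triangle _ _ (s n.+1).1 w l; rewrite (@metric_sym _ _ w l).
move: h1 h2 => /=; lra.
Qed.

Lemma orbit_meets (G : groupType) {X : metricType R} (act : G -> X -> X)
  (x0 : X) (O : set X) :
  is_action act -> minimal act -> O !=set0 -> open O ->
  exists g, O (act g x0).
Proof.
move=> [cact [a1 aM]] mini [z Oz] oO.
pose Orb := [set act g x0 | g in [set: G]].
have cl : closure Orb = setT.
  apply: mini; last 1 first.
  - move=> g x clx B nB.
    have nB' : nbhs x (act g @^-1` B) := cact g x B nB.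
    have [_ [[h _ <-] /= hB]] := clx _ nB'.
    exists (act g (act h x0)); split => //.
    by exists (g * h)%g => //; rewrite aM.
  - by exists x0; apply: subset_closure; exists 1%g => //.
  - exact: closed_closure.
have : closure Orb z by rewrite cl.
move=> /(_ O (open_nbhs_nbhs (conj oO Oz))) [_ [[g _ <-] Og]].
by exists g.
Qed.

End Helpers.

Theorem lemma3p1 (R : realType) (G : groupType) (X Xeq : metricType R)
    (act : G -> X -> X) (acteq : G -> Xeq -> Xeq) (pieq : X -> Xeq)
    (N : natinf) :
  countable [set: G] -> infinite_set [set: G] ->
  tds act -> minimal act ->
  max_eq_factor act acteq pieq ->
  almost_N_to_one pieq N ->
  forall E : set X, fibre_closure pieq E -> card_geq E N.
Proof.
move=> _ _ [cX [cact [a1 aM]]] mini [[cY [_ [ae1 aeM]]] [_ [[cpi [spi epi]] _]]].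
move=> [U [oU sU]] E [[[x0 Ex0] _] HE].
apply: contrapT => ngeq.
have finE : finite_set E.
  case: N ngeq {sU} => [n|] /= ng; last by apply: contrapT.
  apply: contrapT => infE; apply: ng.
  apply: (card_le_trans (subset_card_le (subsetT `I_n))).
  by apply/infiniteP.
have [s0 Es0] := (finite_seqP E).1 finE.
pose s := undup s0.
have Es : E = [set` s].
  by rewrite Es0; apply/funext => x /=; rewrite mem_undup.
have us : uniq s := undup_uniq s0.
have Big : forall A : set X, card_is A N -> exists2 p : nat -> X,
    (forall j, (j <= size s)%N -> A (p j)) &
    (forall j j', (j <= size s)%N -> (j' <= size s)%N -> p j = p j' -> j = j').
  move=> A cA.
  have [g hg] : exists g : X -> nat, forall j, (j <= size s)%N ->
      exists2 x, A x & g x = j.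
    case: N ngeq cA {sU} => [n|] /= ng cA.
    - have le : (size s < n)%N.
        rewrite ltnNge; apply/negP => hn; apply: ng.
        apply/pcard_geP; apply/surjPex; exists (fun x => index x s).
        move=> j /= jn; exists (nth x0 s j); last first.
          by rewrite index_uniq // (leq_trans jn).
        by rewrite Es /= mem_nth // (leq_trans jn).
      have [_] := (card_eqPle A `I_n).1 cA.
      move/pcard_geP/surjPex => [g hg]; exists g => j hj.
      have [x Ax gx] := hg j (leq_ltn_trans hj le).
      by exists x.
    - have := (infiniteP A).1 cA.
      move/pcard_geP/surjPex => [g hg]; exists g => j hj.
      have [x Ax gx] := hg j I.
      by exists x.
  have hp : forall j, exists x, (j <= size s)%N -> A x /\ g x = j.
    move=> j; case: (pselect (j <= size s)%N) => hj; last by exists x0.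
    by have [x Ax gx] := hg j hj; exists x.
  have [p Hp] := choice hp.
  exists p => [j hj|j j' hj hj' pe]; first exact: (Hp j hj).1.
  by rewrite -(Hp j hj).2 -(Hp j' hj').2 pe.
have [M HM] := bnd2 cX.
pose W (k : nat) := [set y : Xeq | exists V : X -> set X,
  [/\ forall a, open (V a),
      forall a u v, E a -> V a u -> V a v -> mdist u v < k.+1%:R^-1 &
      pieq @^-1` [set y] `<=` \bigcup_(a in E) V a]].
have Wopen : forall k, open (W k).
  move=> k; rewrite openE => y [V [oV dV sub]].
  pose O := \bigcup_(a in E) V a.
  have oO : open O by apply: bigcup_open => a _; exact: oV.
  have cC : compact (pieq @` (~` O)).
    apply: continuous_compact; first exact: continuous_subspaceT.
    rewrite -[~` O]setTI; apply: compact_closedI => //.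
    exact: open_closedC.
  have clC : closed (pieq @` (~` O)) := compact_closed (@metric_hausdorff _ Xeq) cC.
  have : open_nbhs y (~` (pieq @` (~` O))).
    split; first exact: closed_openC.
    move=> [x /= nOx pxy]; apply: nOx; apply: sub; by rewrite /= pxy.
  move/open_nbhs_nbhs; apply: filterS => y' hy'.
  exists V; split => // x /= pxy'; apply: contrapT => nOx; apply: hy'.
  by exists x.
have Wdense : forall k, dense (W k).
  move=> k O [y0 Oy0] oO.
  pose O' := pieq @^-1` O.
  have oO' : open O' := open_comp (fun x _ => cpi x) oO.
  have [xy0 pxy0] := spi y0.
  have O'ne : O' !=set0 by exists xy0; rewrite /O' /= pxy0.
  have [g Og] := orbit_meets _ act x0 _ (conj cact (conj a1 aM)) mini O'ne oO'.
  have : nbhs x0 (act g @^-1` O') := cact g x0 _ (open_nbhs_nbhs (conj oO' Og)).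
  move/nbhs_mdistE => [eta eta0 Heta].
  pose delta : R := k.+1%:R^-1 / 2.
  have delta0 : 0 < delta by rewrite divr_gt0 // invr_gt0 ltr0n.
  have hr : forall a, exists r : R, 0 < r /\
      forall w, mdist a w < r -> mdist (act g a) (act g w) < delta.
    move=> a; have [r r0 Hr] := cont_mdist (act g) a delta (cact g) delta0.
    by exists r.
  have [r Hr] := choice hr.
  have [eps eps0 [epseta Heps]] := seq_min _ s r eta (fun a => (Hr a).1) eta0.
  have [F [y _ FE] hEF] := HE eps eps0.
  rewrite -FE in hEF.
  have Fne : (pieq @^-1` [set y]) !=set0 by have [x hx] := spi y; exists x.
  have [x Fx dx] := hd_near _ _ _ _ HM Fne hEF _ Ex0.
  exists (acteq g y); split.
    have := Heta x (lt_le_trans dx epseta); rewrite /O' /= epi.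
    by rewrite /= in Fx; rewrite Fx.
  exists (fun a => act (g^-1)%g @^-1` [set w | mdist a w < eps]); split.
  - move=> a; apply: open_comp => [w _|]; [exact: cact | exact: mball_open].
  - move=> a u v Ea /= hu hv.
    have ra : eps <= r a by apply: Heps; rewrite Es in Ea.
    have hu' := (Hr a).2 _ (lt_le_trans hu ra).
    have hv' := (Hr a).2 _ (lt_le_trans hv ra).
    rewrite -aM mulgV a1 in hu'; rewrite -aM mulgV a1 in hv'.
    have := @metric_triangle _ _ u (act g a) v.
    rewrite (@metric_sym _ _ u (act g a)).
    have -> : k.+1%:R^-1 = delta + delta by rewrite /delta -splitr.
    lra.
  - move=> z /= hz.
    have Fw : pieq (act (g^-1)%g z) = y by rewrite epi hz -aeM mulVg ae1.
    rewrite hd_sym in hEF.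
    have [a Ea da] := hd_near _ _ _ _ HM (ex_intro _ x0 Ex0) hEF _ (Fw : [set y] _).
    by exists a => //=; rewrite metric_sym.
pose V n := U n `&` W n.
have oV : forall n, open (V n) /\ dense (V n).
  move=> n; split; first exact: openI (proj1 (oU n)) (Wopen n).
  exact: dense_inter (proj1 (oU n)) (proj2 (oU n)) (Wdense n).
have [l hl] := baire_cpt (pieq x0) V cY oV.
have cl : card_is (pieq @^-1` [set l]) N by apply: sU => n _; exact: (hl n).1.
have [p pA pinj] := Big _ cl.
pose m := size s.
have h1 : forall j, exists e : R, (j <= m)%N -> 0 < e /\
    forall j', (j' <= m)%N -> j' != j -> e <= mdist (p j) (p j').
  move=> j; case: (pselect (j <= m)%N) => hj; last by exists 1.
  have hpos : forall j', (j' <= m)%N ->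
      0 < (fun j' => if j' == j then 1 else mdist (p j) (p j')) j'.
    move=> j' hj' /=; case: ifPn => // nj; rewrite mdist_gt0; apply/eqP => pe.
    by move/eqP: nj; apply; apply: pinj.
  have [e e0 he] := nat_min m _ hpos.
  exists e => _; split => // j' hj' nj; have := he j' hj'.
  by rewrite /= (negbTE nj).
have [e He] := choice h1.
have [d0 d00 hd0] := nat_min m e (fun j hj => ((He j hj).1)).
pose k := Num.truncn (d0^-1).
have kd : k.+1%:R^-1 < d0.
  rewrite -ltf_pV2 ?posrE ?invr_gt0 ?ltr0n // invrK; exact: truncnS_gt.
have [Vk [_ dV sub]] := (hl k).2.
have hq : forall j, exists a, (j <= m)%N -> E a /\ Vk a (p j).
  move=> j; case: (pselect (j <= m)%N) => hj; last by exists x0.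
  by have [a Ea Va] := sub _ (pA j hj); exists a.
have [q Hq] := choice hq.
pose f j := index (q j) s.
have [j [j' [hj hj' fjj' njj']]] : exists j j', [/\ (j <= m)%N, (j' <= m)%N,
    f j = f j' & j != j'].
  apply: contrapT => nx.
  have : (m.+1 <= m)%N.
    apply: (@pigeonhole m.+1 m f).
      move=> a b; rewrite !in_setE /= !ltnS => ha hb fab.
      apply: contrapT => nab; apply: nx; exists a, b; split => //.
      by apply/eqP.
    move=> _ [a /= ha <-]; rewrite /f index_mem.
    by have := (Hq a ha).1; rewrite Es.
  by rewrite ltnn.
have qe : q j = q j'.
  have qj : q j \in s by have := (Hq j hj).1; rewrite Es.
  have qj' : q j' \in s by have := (Hq j' hj').1; rewrite Es.
  by rewrite -(nth_index x0 qj) -(nth_index x0 qj') -/(f j) fjj'.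
have := dV (q j) (p j) (p j') (Hq j hj).1 (Hq j hj).2.
rewrite qe => /(_ (Hq j' hj').2).
have njj : j' != j by rewrite eq_sym.
have := (He j hj).2 j' hj' njj.
have := hd0 j hj.
move=> z1 z2 z3.
have := lt_trans (le_lt_trans (le_trans z1 z2) z3) kd.
by rewrite ltxx.
Qed.
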